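(* Let $G$ be a connected graph with at least $2$ vertices and let $T$ be a minimum connecting transition set of $G$. Then $|T|\ge \frac{2}{3}\tau(G)$, where $$\tau(G)=\sum_{C}\begin{cases}|C|-2 & \text{if } G[C] \text{ is connected},\\ |C|-1 & \text{otherwise},\end{cases}$$ the sum ranging over all co-connected components $C$ of $G$ with $|C|\ge 2$. (Together with the existence of a connecting transition set of size $\tau(G)$, this gives a polynomial-time $\frac32$-approximation.)
   Context: All graphs are finite, simple and undirected. $G[X]$ denotes the subgraph induced by $X\subseteq V(G)$. The complement $\bar G$ has vertex set $V(G)$ and an edge $xy$ ($x\ne y$) iff $xy\notin E(G)$. A co-connected component of $G$ is (the vertex set of) a connected component of $\bar G$. A transition of a graph $G$ is an unordered pair $\{ab,bc\}$ of two distinct edges of $G$ sharing the vertex $b$ (so $a\neq c$); it is written $abc$. A walk in $G$ is a sequence $(v_1,\dots,v_k)$ of vertices with $v_iv_{i+1}\in E(G)$ for all $i\le k-1$; it leads from $v_1$ to $v_k$. For a set $T$ of transitions of $G$, a walk $(v_1,\dots,v_k)$ is $T$-compatible if for every $i\in[1,k-2]$, either $v_i=v_{i+2}$ or $v_iv_{i+1}v_{i+2}\in T$. The graph $G$ is $T$-connected, and $T$ is a connecting transition set of $G$, if for all vertices $u,v$ of $G$ there is a $T$-compatible walk leading from $u$ to $v$. A minimum connecting transition set is one of minimum cardinality. *)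

(* Defs.v *)
From mathcomp Require Import all_boot.
Set Implicit Arguments. Unset Strict Implicit. Unset Printing Implicit Defensive.

Definition simple_graph (V : finType) (e : rel V) : Prop :=
  symmetric e /\ irreflexive e.

(* A transition {ab, bc} (a <> c, ab, bc edges) is encoded as the pair
   (b, {a, c}) : middle vertex and the 2-set of outer endpoints. This is a
   bijective encoding of unordered pairs of distinct edges sharing b. *)
Definition is_transition (V : finType) (e : rel V) (t : V * {set V}) : Prop :=
  exists a c, [/\ a != c, e a t.1, e t.1 c & t.2 = [set a; c]].

Definition transition_set (V : finType) (e : rel V) (T : {set V * {set V}}) : Prop :=
  forall t, t \in T -> is_transition e t.

Definition trans_of (V : finType) (a b c : V) : V * {set V} := (b, [set a; c]).

Fixpoint compat (V : finType) (T : {set V * {set V}}) (s : seq V) : bool :=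
  match s with
  | a :: ((b :: c :: _) as s') =>
      ((a == c) || (trans_of a b c \in T)) && compat T s'
  | _ => true
  end.

Definition T_connected (V : finType) (e : rel V) (T : {set V * {set V}}) : Prop :=
  forall u v : V, exists p : seq V,
    path e u p /\ last u p = v /\ compat T (u :: p).

Definition connecting_transition_set (V : finType) (e : rel V)
    (T : {set V * {set V}}) : Prop :=
  transition_set e T /\ T_connected e T.

Definition min_connecting_transition_set (V : finType) (e : rel V)
    (T : {set V * {set V}}) : Prop :=
  connecting_transition_set e T /\
  forall T' : {set V * {set V}}, connecting_transition_set e T' -> #|T| <= #|T'|.

Definition graph_connected (V : finType) (e : rel V) : Prop :=
  forall u v : V, connect e u v.

Definition compl_rel (V : finType) (e : rel V) : rel V :=
  [rel x y | (x != y) && ~~ e x y].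

Definition co_components (V : finType) (e : rel V) : {set {set V}} :=
  [set [set y | connect (compl_rel e) x y] | x : V].

Definition induced_connected (V : finType) (e : rel V) (C : {set V}) : bool :=
  [forall x in C, forall y in C,
     connect [rel u w | [&& e u w, u \in C & w \in C]] x y].

Definition tau (V : finType) (e : rel V) : nat :=
  \sum_(C in co_components e | 2 <= #|C|)
     (if induced_connected e C then #|C| - 2 else #|C| - 1).

(* Main.v *)
Require Import Defs.
From mathcomp Require Import all_boot.
From mathcomp Require Import zify.
From Stdlib Require Import FunctionalExtensionality.
Set Implicit Arguments. Unset Strict Implicit. Unset Printing Implicit Defensive.


Section UF.
Variable X : finType.
Definition mrg (g : X -> X) (p : X * X) : X -> X :=
  fun z => if g z == g p.1 then g p.2 else g z.
Definition uf (s : seq (X * X)) : X -> X := foldl mrg id s.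

Lemma uf_rcons s p : uf (rcons s p) = mrg (uf s) p.
Proof. by rewrite /uf foldl_rcons. Qed.

Lemma mrg_eq g p a b : g a = g b -> mrg g p a = mrg g p b.
Proof. by rewrite /mrg => ->. Qed.

Lemma uf_merged s p : p \in s -> uf s p.1 = uf s p.2.
Proof.
elim/last_ind: s => [//|s q IH].
rewrite mem_rcons in_cons uf_rcons => /orP[/eqP->|/IH]; last exact: mrg_eq.
rewrite /mrg eqxx; by case: ifP.
Qed.

Lemma uf_card s : #|X| <= #|[set uf s z | z : X]| + size s.
Proof.
elim/last_ind: s => [|s q IH].
  rewrite addn0; apply: subset_leq_card; apply/subsetP => z _.
  by apply/imsetP; exists z.
rewrite size_rcons uf_rcons.
suff H : #|[set uf s z | z : X]| <= #|[set mrg (uf s) q z | z : X]| + 1 by lia.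
set g := uf s.
rewrite (cardsD1 (g q.1)) addnC leq_add //; last by case: (_ \in _).
apply: subset_leq_card; apply/subsetP => w.
rewrite in_setD1 => /andP[wn /imsetP[z _ wE]]; subst w.
apply/imsetP; exists z => //; by rewrite /mrg (negbTE wn).
Qed.
End UF.

Section Pot.
Variables (X Y : finType) (W : X -> {set Y}) (D : {set X}).
Definition uroots (g : X -> X) := [set r in D | g r == r].
Definition cls (g : X -> X) r := \bigcup_(z in D | g z == r) W z.
Definition okp (p : X * X) := [&& p.1 \in D, p.2 \in D & W p.1 :&: W p.2 != set0].
Definition inv g k := [/\ {in D, forall z, g z \in D}, {in D, forall z, g (g z) = g z} &
  \sum_(r in uroots g) #|cls g r| + 2 * #|D| <= 2 * #|uroots g| + \sum_(z in D) #|W z| + k].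

Lemma inv_mrg g k p : inv g k -> okp p -> inv (mrg g p) k.+1.
Proof.
move=> [gD gI Hs] /and3P[xD yD nI].
case: (eqVneq (g p.1) (g p.2)) => Hxy.
  have E : mrg g p = g.
    by apply: functional_extensionality => z; rewrite /mrg -Hxy; case: eqP => [->|].
  rewrite E; split => //; rewrite addnS; exact: leqW.
set a := g p.1 in Hxy *; set b := g p.2 in Hxy *.
have aD : a \in D by exact: gD.
have bD : b \in D by exact: gD.
have ga : g a = a by exact: gI.
have gb : g b = b by exact: gI.
have g'E z : mrg g p z = if g z == a then b else g z by [].
split.
- by move=> z zD; rewrite g'E; case: ifP => _; [|exact: gD].
- move=> z zD; rewrite !g'E; case: (eqVneq (g z) a) => gz.
    by rewrite gb eq_sym (negbTE Hxy).
  by rewrite gI // (negbTE gz).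
have R'E : uroots (mrg g p) = uroots g :\ a.
  apply/setP => r; rewrite !inE g'E.
  case: (eqVneq (g r) a) => gra.
    rewrite gra; case: (eqVneq a r) => [ar|ar]; first by rewrite -ar eq_sym (negbTE Hxy) andbF.
    rewrite andbF; case: (eqVneq b r) => [br|]; rewrite ?andbF //.
    by move: Hxy; rewrite -gra -br gb eqxx.
  case: (eqVneq r a) => [ra|ra] //=.
  by rewrite ra ga eqxx in gra.
have clsb : cls (mrg g p) b = cls g a :|: cls g b.
  apply/setP => v; apply/bigcupP/setUP.
    move=> [z /andP[zD]]; rewrite g'E; case: (eqVneq (g z) a) => [gz _|gz /eqP gzb] vz.
      by left; apply/bigcupP; exists z => //; rewrite zD gz eqxx.
    by right; apply/bigcupP; exists z => //; rewrite zD gzb eqxx.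
  move=> [] /bigcupP[z /andP[zD /eqP gz] vz]; exists z => //; rewrite zD g'E gz /= ?eqxx //.
  by case: ifP.
have clsr r : r != a -> r != b -> cls (mrg g p) r = cls g r.
  move=> ra rb; apply: eq_bigl => z; rewrite g'E.
  case: (eqVneq (g z) a) => gz //=.
  by rewrite gz eq_sym (negbTE rb) eq_sym (negbTE ra).
have aR : a \in uroots g by rewrite inE aD ga eqxx.
have bR : b \in uroots g :\ a by rewrite !inE eq_sym Hxy bD gb eqxx.
have Hcard : #|uroots g| = (#|uroots g :\ a|).+1 by rewrite (cardsD1 a) aR.
rewrite R'E (bigD1 b) //= clsb.
have bR2 : (b \in uroots g) && (b != a) by rewrite inE bD gb eqxx /= eq_sym.
rewrite (bigD1 a aR) (bigD1 b bR2) /= in Hs.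
have Hsum : \sum_(i in uroots g :\ a | i != b) #|cls (mrg g p) i| =
            \sum_(i | (i \in uroots g) && (i != a) && (i != b)) #|cls g i|.
  rewrite big_mkcond [RHS]big_mkcond; apply: eq_bigr => r _; rewrite !inE.
  case: (eqVneq r a) => ra; rewrite ?andbF //=; case: (eqVneq r b) => rb; rewrite ?andbF //=.
  by rewrite !andbT clsr.
rewrite Hsum.
have Hint : 0 < #|cls g a :&: cls g b|.
  case/set0Pn: nI => v; rewrite inE => /andP[v1 v2].
  apply/card_gt0P; exists v; rewrite inE; apply/andP; split; apply/bigcupP.
    by exists p.1 => //; rewrite xD eqxx.
  by exists p.2 => //; rewrite yD eqxx.
have := cardsUI (cls g a) (cls g b).
rewrite Hcard in Hs; move: Hs; rewrite (eq_bigl (fun i => (i \in uroots g) && (i != a) && (i != b))) //; lia.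
Qed.

Lemma inv_uf s : all okp s -> inv (uf s) (size s).
Proof.
elim/last_ind: s => [|s q IH].
  move=> _; split => //.
  have RE : uroots id = D by apply/setP => r; rewrite !inE eqxx andbT.
  have CE : \sum_(r in D) #|cls id r| = \sum_(r in D) #|W r|.
    apply: eq_bigr => r rD; have -> : cls id r = W r; last by []. apply/setP => v.
    apply/bigcupP/idP => [[z /andP[_ /eqP ->]]//|vr].
    by exists r => //; rewrite rD eqxx.
  rewrite RE CE /=; lia.
rewrite all_rcons => /andP[oq os]; rewrite uf_rcons size_rcons.
exact: inv_mrg (IH os) oq.
Qed.
End Pot.

Section Graph.
Variables (V : finType) (e : rel V).
Hypothesis esym : symmetric e.
Hypothesis eirr : irreflexive e.

Definition Ed : {set {set V}} := [set z | [exists x, exists y, e x y && (z == [set x; y])]].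

Lemma inEd x y : e x y -> [set x; y] \in Ed.
Proof. by move=> exy; rewrite inE; apply/existsP; exists x; apply/existsP; exists y; rewrite exy eqxx. Qed.

Lemma Ed2 z : z \in Ed -> #|z| = 2.
Proof.
rewrite inE => /existsP[x /existsP[y /andP[exy /eqP ->]]].
rewrite cards2; case: eqVneq => // xy; by rewrite xy eirr in exy.
Qed.

Lemma nonedge u v z : u != v -> ~~ e u v -> z \in Ed -> [set u; v] != z.
Proof.
move=> uv euv; rewrite inE => /existsP[x /existsP[y /andP[exy /eqP ->]]].
apply/negP => /eqP E.
have uE : u \in [set x; y] by rewrite -E !inE eqxx.
have vE : v \in [set x; y] by rewrite -E !inE eqxx orbT.
move: uE vE; rewrite !inE => /orP[]/eqP ux /orP[]/eqP vy; subst; rewrite ?eqxx // in uv.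
- by rewrite exy in euv.
- by rewrite esym exy in euv.
Qed.

Definition tp (t : V * {set V}) : {set V} * {set V} :=
  ([set t.1; nth t.1 (enum t.2) 0], [set t.1; nth t.1 (enum t.2) 1]).

Lemma tp_spec b a c : a != c ->
  tp (b, [set a; c]) = ([set b; a], [set b; c]) \/ tp (b, [set a; c]) = ([set b; c], [set b; a]).
Proof.
move=> ac; set A := [set a; c].
have hs : size (enum A) = 2 by rewrite -cardE cards2 ac.
have hu := enum_uniq A.
have xA x : x \in enum A -> x \in A by rewrite mem_enum.
rewrite /tp /=.
move: hs hu xA; case: (enum A) => [|x [|y [|]]] //= _ /andP[xy _] xA.
rewrite !inE in xy.
have := xA x; rewrite !inE eqxx => /(_ isT).
have := xA y; rewrite !inE eqxx orbT => /(_ isT).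
move=> /orP[]/eqP yv /orP[]/eqP xv; subst; rewrite ?eqxx // in xy; by [right | left].
Qed.

Lemma walk_cls (T : {set V * {set V}}) (g : {set V} -> {set V}) :
  (forall t, t \in T -> g (tp t).1 = g (tp t).2) ->
  forall p u x, path e u (x :: p) -> compat T (u :: x :: p) ->
  exists2 z, (z \in Ed) && (last x p \in z) & g z = g [set u; x].
Proof.
move=> gm; elim => [|y p IH] u x /=.
  rewrite andbT => uxe _; exists [set u; x] => //.
  by rewrite inEd // !inE eqxx orbT.
move=> /andP[ux pth] /andP[c1 c2].
have [z zH gz] := IH x y pth c2.
exists z => //; rewrite gz.
case: (eqVneq u y) => [<-|uy]; first by rewrite setUC.
rewrite (negbTE uy) /= in c1.
have := gm _ c1; rewrite /trans_of.
case: (tp_spec x uy) => -> /= E; rewrite [[set u; x]]setUC; by rewrite ?E.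
Qed.

Definition Pr (S : {set V}) : seq (V * V) :=
  if 4 <= #|S| then
    (if [pick w in S] is Some w then [seq (w, v) | v <- enum (S :\ w)] else [::])
  else if #|S| == 3 then
    (if [pick uv : V * V | [&& uv.1 \in S, uv.2 \in S & compl_rel e uv.1 uv.2]] is Some uv
     then [:: uv] else [::])
  else [::].

Lemma Pr_size (S : {set V}) : 2 <= #|S| -> 2 * size (Pr S) + 6 <= 3 * #|S|.
Proof.
move=> S2; rewrite /Pr; case: ifP => H4.
  case: pickP => [w wS|_] /=; last by lia.
  rewrite size_map -cardE; have := cardsD1 w S; rewrite wS; lia.
move/negbT: H4 => H4.
case: ifP => /eqP H3 /=; last by lia.
case: pickP => [uv _|_] /=; lia.
Qed.

Lemma two_sub (S B : {set V}) : B \subset S -> #|B| = 2 -> #|S| = 3 ->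
  exists2 w, w \in S & B = S :\ w.
Proof.
move=> BS B2 S3.
have : #|S :\: B| == 1 by rewrite cardsD (setIidPr BS) B2 S3.
case/cards1P => w wE; exists w.
  have wSB : w \in S :\: B by rewrite wE set11.
  by move: wSB; rewrite inE => /andP[].
by rewrite -wE setDDr setDv set0U (setIidPr BS).
Qed.

Lemma uniq3 (S r z : {set V}) (u v a b : V) : #|S| = 3 -> r \in Ed -> z \in Ed -> r \subset S -> z \subset S ->
  z != r -> u \in S -> v \in S -> a \in S -> b \in S ->
  compl_rel e u v -> compl_rel e a b -> [set u; v] = [set a; b].
Proof.
move=> S3 rE zE rS zS zr uS vS aS bS /andP[uv euv] /andP[ab eab].
have sub2 (x y : V) : x \in S -> y \in S -> [set x; y] \subset S.
  by move=> xS yS; apply/subsetP => w; rewrite !inE => /orP[]/eqP->.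
have [wr wrS rE'] := two_sub rS (Ed2 rE) S3.
have [wz wzS zE'] := two_sub zS (Ed2 zE) S3.
have c2 (x y : V) : x != y -> #|[set x; y]| = 2 by move=> xy; rewrite cards2 xy.
have [w1 w1S E1] := two_sub (sub2 _ _ uS vS) (c2 _ _ uv) S3.
have [w2 w2S E2] := two_sub (sub2 _ _ aS bS) (c2 _ _ ab) S3.
have n1 := nonedge uv euv rE; have n2 := nonedge uv euv zE.
have n3 := nonedge ab eab rE; have n4 := nonedge ab eab zE.
have wrz : wz != wr by apply: contraNneq zr => h; rewrite zE' rE' h.
have K1 : #|S :\ wr :\ wz| <= 1.
  have h1 := cardsD1 wr S; have h2 := cardsD1 wz (S :\ wr).
  have i2 : wz \in S :\ wr by rewrite in_setD1 wrz wzS.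
  rewrite wrS S3 add1n in h1; rewrite i2 add1n in h2; case: h1 => h1; rewrite h2 in h1; by case: h1 => ->.
have m1 : w1 \in S :\ wr :\ wz.
  rewrite !inE w1S andbT; apply/andP; split.
    by apply: contraNneq n2 => h; rewrite E1 zE' h.
  by apply: contraNneq n1 => h; rewrite E1 rE' h.
have m2 : w2 \in S :\ wr :\ wz.
  rewrite !inE w2S andbT; apply/andP; split.
    by apply: contraNneq n4 => h; rewrite E2 zE' h.
  by apply: contraNneq n3 => h; rewrite E2 rE' h.
by rewrite E1 E2 ((card_le1_eqP K1) _ _ m1 m2).
Qed.

Lemma Pr_ok (S r : {set V}) (f : V -> V) : r \in Ed -> r \subset S ->
  (3 <= #|S| -> exists2 z, z \in Ed & (z \subset S) && (z != r)) ->
  (forall p, p \in Pr S -> f p.1 = f p.2) ->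
  forall u v, u \in S -> v \in S -> compl_rel e u v -> f u = f v.
Proof.
move=> rE rS Hz fP u v uS vS cuv.
have S2 : 2 <= #|S| by rewrite -(Ed2 rE); exact: subset_leq_card.
move: fP; rewrite /Pr; case: ifP => H4.
  case: pickP => [w wS|/(_ u)]; last by rewrite uS.
  move=> fP.
  have fw y : y \in S -> f w = f y.
    move=> yS; case: (eqVneq y w) => [->//|yw].
    apply: (fP (w, y)); apply/mapP; exists y => //; by rewrite mem_enum !inE yw.
  by rewrite -(fw _ uS) -(fw _ vS).
case: ifP => /eqP H3.
  case: pickP => [[a b] /= /and3P[aS bS cab]|/(_ (u, v))]; last by rewrite /= uS vS cuv.
  move=> fP; have fab := fP (a, b) (mem_head _ _); rewrite /= in fab.
  have [z zE /andP[zS zr]] : exists2 z, z \in Ed & (z \subset S) && (z != r) by apply: Hz; rewrite H3.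
  have E := uniq3 H3 rE zE rS zS zr uS vS aS bS cuv cab.
  have : u \in [set a; b] by rewrite -E set21.
  have : v \in [set a; b] by rewrite -E set22.
  by rewrite !inE => /orP[]/eqP-> /orP[]/eqP->; rewrite ?fab.
move=> _.
move/negbT: H4 => H4.
have S2' : #|S| = 2 by lia.
have SE : S = r by apply/eqP; rewrite eq_sym eqEcard rS S2' (Ed2 rE).
case/andP: cuv => uv euv.
have : [set u; v] == r.
  rewrite -SE eqEcard cards2 uv S2' leqnn andbT.
  by apply/subsetP => w; rewrite !inE => /orP[]/eqP->.
by rewrite (negbTE (nonedge uv euv rE)).
Qed.

Lemma root_facts (g : {set V} -> {set V}) r : r \in uroots Ed g ->
  [/\ r \in Ed, r \subset cls id Ed g r &
   (3 <= #|cls id Ed g r| -> exists2 z, z \in Ed & (z \subset cls id Ed g r) && (z != r))].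
Proof.
rewrite inE => /andP[rE /eqP gr]; split => //.
  by apply: (bigcup_sup r); rewrite rE gr eqxx.
move=> H3.
case: (boolP [exists z, [&& z \in Ed, g z == r & z != r]]).
  case/existsP => z /and3P[zE gz zr]; exists z => //; rewrite zr andbT.
  by apply: (bigcup_sup z); rewrite zE gz.
rewrite negb_exists => /forallP H.
have : cls id Ed g r \subset r.
  apply/bigcupsP => z /andP[zE gz]; move: (H z); rewrite zE gz /= negbK => /eqP->.
  exact: subxx.
move/subset_leq_card; rewrite (Ed2 rE) => H2.
by move: (leq_trans H3 H2).
Qed.

Lemma tau_le : tau e + #|co_components e| <= #|V|.
Proof.
have csym : connect_sym (compl_rel e).
  by apply: sym_connect_sym => x y; rewrite /compl_rel /= eq_sym esym.
have part : partition (co_components e) [set: V].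
  have -> : co_components e = equivalence_partition (connect (compl_rel e)) [set: V].
    apply/setP => C; apply/imsetP/imsetP => [[x _ ->]|[x _ ->]]; exists x => //;
    by apply/setP => y; rewrite !inE.
  apply: equivalence_partitionP => x y z _ _ _; split; first exact: connect0.
  move=> cxy; apply/idP/idP => H.
    by apply: connect_trans H; rewrite csym.
  exact: connect_trans cxy H.
rewrite -cardsT (card_partition part) /tau.
have -> : #|co_components e| = \sum_(C in co_components e) 1 by rewrite sum_nat_const muln1.
apply: (@leq_trans (\sum_(C in co_components e) (#|C| - 1) + \sum_(C in co_components e) 1)).
  rewrite leq_add2r big_mkcondr /=; apply: leq_sum => C _.
  case: ifP => // _; case: ifP => _; lia.
rewrite -big_split /=; apply: leq_sum => C /imsetP[x _ ->].
have : 0 < #|[set y | connect (compl_rel e) x y]|.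
  by apply/card_gt0P; exists x; rewrite inE connect0.
lia.
Qed.

Lemma img_le (x0 : V) (f : V -> V) :
  (forall u w, connect (compl_rel e) u w -> f u = f w) ->
  #|[set f x | x : V]| <= #|co_components e|.
Proof.
move=> fc.
pose h (C : {set V}) := f (odflt x0 [pick y in C]).
apply: (@leq_trans #|[set h C | C in co_components e]|); last exact: leq_imset_card.
apply: subset_leq_card; apply/subsetP => w /imsetP[x _ ->].
apply/imsetP; exists [set y | connect (compl_rel e) x y]; first by apply/imsetP; exists x.
rewrite /h; case: pickP => [y|/(_ x)]; last by rewrite inE connect0.
by rewrite inE /= => /fc.
Qed.

End Graph.
Unset Implicit Arguments. Set Strict Implicit. Set Printing Implicit Defensive.

Theorem theorem7 (V : finType) (e : rel V) (T : {set V * {set V}}) :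
  simple_graph e -> graph_connected e -> 2 <= #|V| ->
  min_connecting_transition_set e T ->
  2 * tau e <= 3 * #|T|.
Proof.
move=> [esym eirr] _ V2 [[Ttr Tcon] _].
have [x0 _] : exists x0 : V, true.
  have /card_gt0P[x _] : 0 < #|V| by lia.
  by exists x.
pose s := [seq tp t | t <- enum T].
have sok : all (okp id (Ed e)) s.
  apply/allP => p /mapP[t]; rewrite mem_enum => tT ->.
  have [a [c [ac eab ebc t2]]] := Ttr t tT.
  case: t t2 {tT} eab ebc => b A /= -> eab ebc.
  have ba : e b a by rewrite esym.
  have bi : [set b; a] :&: [set b; c] != set0.
    by apply/set0Pn; exists b; rewrite !inE !eqxx.
  case: (tp_spec b ac) => ->; rewrite /okp /= !inEd //; by rewrite setIC.
have [gD gI Hpot] := inv_uf sok.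
pose g := uf s.
have gm : forall t, t \in T -> g (tp t).1 = g (tp t).2.
  move=> t tT; apply: uf_merged; apply/mapP; exists t => //; by rewrite mem_enum.
pose R := uroots (Ed e) g.
pose C r := cls id (Ed e) g r.
pose P := flatten [seq Pr e (C r) | r <- enum R].
have Key2 : \sum_(r in R) #|C r| <= 2 * #|R| + #|T|.
  have E1 : \sum_(z in Ed e) #|id z| = 2 * #|Ed e|.
    rewrite (eq_bigr (fun _ => 2)); first by rewrite sum_nat_const mulnC.
    by move=> z zE; rewrite (Ed2 eirr zE).
  have E2 : size s = #|T| by rewrite size_map -cardE.
  rewrite E1 E2 in Hpot; rewrite -(leq_add2r (2 * #|Ed e|)) addnAC; exact: Hpot.
have Key1 : 2 * size P + 6 * #|R| <= 3 * \sum_(r in R) #|C r|.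
  have ES : size P = \sum_(r in R) size (Pr e (C r)).
    by rewrite size_flatten /shape -map_comp sumnE big_map big_enum.
  have H : \sum_(r in R) (2 * size (Pr e (C r)) + 6) <= \sum_(r in R) 3 * #|C r|.
    apply: leq_sum => r rR; apply: Pr_size.
    have [rE rS _] := root_facts eirr rR.
    by rewrite -(Ed2 eirr rE); apply: subset_leq_card.
  rewrite ES; move: H; rewrite big_split /= sum_nat_const -!big_distrr /= => H. by rewrite [#|R| * 6]mulnC in H.
have Key3 : tau e <= size P.
  pose f := uf P.
  have fP : forall p, p \in P -> f p.1 = f p.2 by move=> p pP; exact: uf_merged.
  have fc : forall u v, compl_rel e u v -> f u = f v.
    move=> u v cuv.
    have [p [pth [lst cmp]]] := Tcon u v.
    case: p pth lst cmp => [|x p] pth lst cmp.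
      by rewrite /= in lst; rewrite lst /compl_rel /= eqxx in cuv.
    have [z /andP[zE vz] gz] := walk_cls gm pth cmp.
    rewrite /= in lst; rewrite lst in vz.
    have ux : e u x by case/andP: pth.
    have uxE := inEd ux.
    pose r := g [set u; x].
    have rR : r \in R by rewrite inE; apply/andP; split; [exact: gD | apply/eqP; exact: gI].
    have [rE rS Hz] := root_facts eirr rR.
    apply: (Pr_ok esym eirr rE rS Hz) => //.
    - move=> q qP; apply: fP; apply/flatten_mapP; exists r => //; by rewrite mem_enum.
    - apply/bigcupP; exists [set u; x]; first by rewrite uxE eqxx.
      by rewrite !inE eqxx.
    - by apply/bigcupP; exists z; rewrite // zE gz eqxx.
  have fcon : forall u w, connect (compl_rel e) u w -> f u = f w.
    move=> u w /connectP[p pth ->]; elim: p u pth => [//|y p IH] u /= /andP[uy pth].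
    by rewrite (fc _ _ uy); exact: IH.
  have := img_le x0 fcon; have := uf_card P; have := tau_le esym; rewrite /f; lia.
lia.
Qed.
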